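(* For each $n\geq1$, $x-1$ divides $T_{1,n}(x,y)$ and $(x-1)^2$ divides $T_{0,n}(x,y)$ in $\mathbb{Z}[x,y]$.
   Context: Graphs are finite; multiple edges are allowed. For a graph $G$, a spanning subgraph $A$ has vertex set $V(G)$ and edge set $E(A)\subseteq E(G)$; $k(A)$ is its number of connected components, $r(A)=|V(G)|-k(A)$, $n(A)=|E(A)|-r(A)$; the weight of $A$ is $(x-1)^{r(G)-r(A)}(y-1)^{n(A)}$. Sierpiński graphs $\Gamma_n$ ($n\ge1$), each with three outmost vertices top, left, right: $\Gamma_1$ is the triangle $K_3$ with its three vertices as top, left, right; $\Gamma_{n+1}$ is obtained from three disjoint copies $G_1,G_2,G_3$ of $\Gamma_n$ by identifying left$(G_1)$ with top$(G_2)$, right$(G_1)$ with top$(G_3)$, right$(G_2)$ with left$(G_3)$; its outmost vertices are top$(G_1)$, left$(G_2)$, right$(G_3)$. $T_{1,n}(x,y)$ is the sum of the weights (with $G=\Gamma_n$) of the spanning subgraphs of $\Gamma_n$ in which the left and right outmost vertices lie in the same component and the top one lies in a different component; $T_{0,n}(x,y)$ is the sum over spanning subgraphs in which the three outmost vertices lie in three distinct components. *)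

(* Defs.v *)
From HB Require Import structures.
From mathcomp Require Import all_boot all_order all_algebra.
Set Implicit Arguments. Unset Strict Implicit. Unset Printing Implicit Defensive.
Import GRing.Theory.

(* Vertices are 0 .. nv-1; edges are a list of (unordered) endpoint pairs,
   so multiple edges are allowed; edge i is the i-th list element. *)
Record mgraph := MG {
  nv : nat;
  edges : seq (nat * nat);
  vtop : nat; vleft : nat; vright : nat }.

Definition triangle : mgraph := MG 3 [:: (0, 1); (1, 2); (0, 2)] 0 1 2.

(* Gluing three copies G1, G2, G3 of G.  Vertex v of copy j (j = 0,1,2 for
   G1,G2,G3) gets raw label j*N + v; the identification sigma maps
   top(G2) to left(G1), top(G3) to right(G1), left(G3) to right(G2). *)
Definition glue (G : mgraph) : mgraph :=
  let N := nv G in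
  let sigma (x : nat) : nat :=
    if x == N + vtop G then vleft G
    else if x == 2 * N + vtop G then vright G
    else if x == 2 * N + vleft G then N + vright G
    else x in
  let vs := undup (map sigma (iota 0 (3 * N))) in
  let relab (x : nat) : nat := index (sigma x) vs in
  let cp (j : nat) :=
    map (fun e : nat * nat => (relab (j * N + e.1), relab (j * N + e.2)))
        (edges G) in
  MG (size vs) (cp 0 ++ cp 1 ++ cp 2)
     (relab (vtop G)) (relab (N + vleft G)) (relab (2 * N + vright G)).

(* Sierpinski graph Gamma_n (meaningful for n >= 1). *)
Definition Gamma (n : nat) : mgraph := iter n.-1 glue triangle.

Section Spanning.
Variable G : mgraph.

(* spanning subgraphs = subsets of the edge (index) set *)
Definition esub := {set 'I_(size (edges G))}.

Definition adjA (A : esub) : rel 'I_(nv G) := fun u v =>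
  [exists i in A, let e := nth (0, 0) (edges G) i in
     ((e.1 == u) && (e.2 == v)) || ((e.2 == u) && (e.1 == v))].

Definition sameComp (A : esub) (u v : nat) : bool :=
  [exists a : 'I_(nv G), exists b : 'I_(nv G),
     [&& (a == u :> nat), (b == v :> nat) & connect (adjA A) a b]].

Definition kcomp (A : esub) : nat :=
  #|[set [set w | connect (adjA A) u w] | u : 'I_(nv G)]|.

Definition rank (A : esub) : nat := nv G - kcomp A.
Definition nullity (A : esub) : nat := #|A| - rank A.

(* Z[x,y] as {poly {poly int}}: x is the outer variable, y the inner one. *)
Definition Zxy := {poly {poly int}}.
Definition xv : Zxy := 'X%R.
Definition yv : Zxy := (('X)%:P)%R.

Definition weight (A : esub) : Zxy :=
  ((xv - 1) ^+ (rank setT - rank A) * (yv - 1) ^+ (nullity A))%R.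

Definition T1sum : Zxy := (\sum_(A : esub | sameComp A (vleft G) (vright G)
                   && ~~ sameComp A (vtop G) (vleft G)) weight A)%R.

Definition T0sum : Zxy := (\sum_(A : esub | [&& ~~ sameComp A (vtop G) (vleft G),
                      ~~ sameComp A (vtop G) (vright G) &
                      ~~ sameComp A (vleft G) (vright G)]) weight A)%R.
End Spanning.

Definition T1 (n : nat) : Zxy := T1sum (Gamma n).
Definition T0 (n : nat) : Zxy := T0sum (Gamma n).

(* Main.v *)
Require Import Defs.
From HB Require Import structures.
From mathcomp Require Import all_boot all_order all_algebra.
Import GRing.Theory.
From Stdlib Require Import Lia.
Set Implicit Arguments. Unset Strict Implicit.

Section Count.
Variable G : mgraph.
Local Notation V := ('I_(nv G)).
Local Notation T := (setT : esub G).

Lemma adjA_sym (A : esub G) : symmetric (adjA A).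
Proof.
move=> u v; rewrite /adjA; apply/existsP/existsP => -[i /andP[Hi He]]; exists i.
all: by rewrite Hi /=; case/orP: He => /andP[-> ->]; rewrite ?orbT.
Qed.

Lemma adjA_subT (A : esub G) x y : connect (adjA A) x y -> connect (adjA T) x y.
Proof.
apply: connect_sub => u v /existsP[i /andP[_ He]]; apply: connect1.
by apply/existsP; exists i; rewrite inE He.
Qed.

Definition cls (A : esub G) (x : V) : {set V} := [set w | connect (adjA A) x w].
Definition gg (S : {set V}) : {set V} := [set w | [exists z in S, connect (adjA T) z w]].

Lemma gg_cls (A : esub G) x : gg (cls A x) = cls T x.
Proof.
apply/setP => w; rewrite !inE; apply/existsP/idP.
  by case=> z /andP[]; rewrite inE => /adjA_subT; apply: connect_trans.
by move=> H; exists x; rewrite inE connect0.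
Qed.

Lemma cls_eq_T (x y : V) : connect (adjA T) x y -> cls T x = cls T y.
Proof.
move=> H; apply/setP => w; rewrite !inE; apply/idP/idP.
  by apply: connect_trans; rewrite (sym_connect_sym (@adjA_sym T)).
by apply: connect_trans.
Qed.

Lemma cls_neq (A : esub G) (x y : V) : ~~ connect (adjA A) x y -> cls A x != cls A y.
Proof.
apply: contra => /eqP E; have : y \in cls A y by rewrite inE connect0.
by rewrite -E inE.
Qed.

Lemma kcompE (A : esub G) : kcomp A = #|[set cls A u | u : V]|.
Proof. by []. Qed.

Lemma kcomp_le (A : esub G) : kcomp A <= nv G.
Proof. rewrite kcompE; apply: leq_trans (leq_imset_card _ _) _; by rewrite card_ord. Qed.

Lemma kcomp_gap (A : esub G) (D : {set {set V}}) (t : V) :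
  D \subset [set cls A u | u : V] -> cls A t \notin D ->
  (forall x, cls A x \in D -> connect (adjA T) t x) ->
  kcomp T + #|D| <= kcomp A.
Proof.
move=> sD tD HD; rewrite !kcompE.
have sub : [set cls T u | u : V] \subset gg @: ([set cls A u | u : V] :\: D).
  apply/subsetP => y /imsetP[x _ ->].
  case: (boolP (cls A x \in D)) => Hx.
    rewrite -(cls_eq_T (HD x Hx)) -(gg_cls A).
    by apply: imset_f; rewrite inE tD; apply: imset_f.
  by rewrite -(gg_cls A); apply: imset_f; rewrite inE Hx; apply: imset_f.
have := leq_trans (subset_leq_card sub) (leq_imset_card _ _).
rewrite (cardsDS sD) => H.
have := subset_leq_card sD.
move: H; set a := #|_|; set b := #|_|; set c := #|_|.
move=> H1 H2; by rewrite -(subnK H2) leq_add2r.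
Qed.

Lemma rank_gap (A : esub G) m : kcomp T + m <= kcomp A -> m <= rank T - rank A.
Proof.
rewrite /rank => H; have := kcomp_le A.
move: H; set a := kcomp T; set b := kcomp A; set N := nv G => H1 H2.
apply/leP; move/leP: H1; move/leP: H2; rewrite -!minusE -!plusE; lia.
Qed.
End Count.
Section Poly.
Variable G : mgraph.
Local Notation V := ('I_(nv G)).
Local Notation T := (setT : esub G).

Lemma sameCompE (A : esub G) u v (hu : u < nv G) (hv : v < nv G) :
  sameComp A u v = connect (adjA A) (Ordinal hu) (Ordinal hv).
Proof.
apply/existsP/idP.
  case=> a /existsP[b /and3P[/eqP ea /eqP eb c]].
  have -> : Ordinal hu = a by apply: val_inj; rewrite /= ea.
  by have -> : Ordinal hv = b by apply: val_inj; rewrite /= eb.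
by move=> c; exists (Ordinal hu); apply/existsP; exists (Ordinal hv); rewrite !eqxx.
Qed.

Hypothesis ht : vtop G < nv G.
Hypothesis hl : vleft G < nv G.
Hypothesis hr : vright G < nv G.
Hypothesis ctl : sameComp T (vtop G) (vleft G).
Hypothesis clr : sameComp T (vleft G) (vright G).

Let t : V := Ordinal ht.
Let l : V := Ordinal hl.
Let r : V := Ordinal hr.

Lemma ctl' : connect (adjA T) t l. Proof. by rewrite -sameCompE. Qed.
Lemma clr' : connect (adjA T) l r. Proof. by rewrite -sameCompE. Qed.

Lemma gap1 (A : esub G) : ~~ sameComp A (vtop G) (vleft G) -> 1 <= rank T - rank A.
Proof.
rewrite (sameCompE _ ht hl) => ntl; apply: rank_gap.
rewrite -(cards1 (cls A l)); apply: (kcomp_gap (t := t)).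
- by rewrite sub1set; apply: imset_f.
- by rewrite inE; apply: cls_neq.
move=> x; rewrite inE => /eqP E.
have : x \in cls A x by rewrite inE connect0.
rewrite E inE => /adjA_subT; exact: connect_trans ctl'.
Qed.

Lemma gap2 (A : esub G) : ~~ sameComp A (vtop G) (vleft G) ->
   ~~ sameComp A (vtop G) (vright G) -> ~~ sameComp A (vleft G) (vright G) ->
   2 <= rank T - rank A.
Proof.
rewrite (sameCompE _ ht hl) (sameCompE _ ht hr) (sameCompE _ hl hr) => ntl ntr nlr.
apply: rank_gap.
have -> : 2 = #|[set cls A l; cls A r]| by rewrite cards2 cls_neq.
apply: (kcomp_gap (t := t)).
- by rewrite subUset !sub1set !imset_f.
- by rewrite !inE negb_or !cls_neq.
move=> x; rewrite !inE => /orP[] /eqP E;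
  (have : x \in cls A x by rewrite inE connect0);
  rewrite E inE => /adjA_subT; apply: connect_trans.
  exact: ctl'.
exact: connect_trans ctl' clr'.
Qed.

Local Open Scope ring_scope.

Lemma T1div : exists Q : Zxy, T1sum G = (xv - 1) * Q.
Proof.
exists (\sum_(A : esub G | sameComp A (vleft G) (vright G)
                   && ~~ sameComp A (vtop G) (vleft G))
   ((xv - 1) ^+ (rank T - rank A).-1 * (yv - 1) ^+ (nullity A))).
rewrite /T1sum big_distrr; apply: eq_bigr => A /andP[_ H].
by rewrite /weight /= mulrA -exprS prednK // gap1.
Qed.

Lemma T0div : exists Q : Zxy, T0sum G = (xv - 1) ^+ 2 * Q.
Proof.
exists (\sum_(A : esub G | [&& ~~ sameComp A (vtop G) (vleft G),
                      ~~ sameComp A (vtop G) (vright G) &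
                      ~~ sameComp A (vleft G) (vright G)])
   ((xv - 1) ^+ (rank T - rank A - 2) * (yv - 1) ^+ (nullity A))).
rewrite /T0sum big_distrr; apply: eq_bigr => A /and3P[H1 H2 H3].
by rewrite /weight /= mulrA -exprD subnKC // gap2.
Qed.
End Poly.
Definition sig (G : mgraph) (x : nat) : nat :=
  if x == nv G + vtop G then vleft G
  else if x == 2 * nv G + vtop G then vright G
  else if x == 2 * nv G + vleft G then nv G + vright G
  else x.
Definition vsG G := undup (map (sig G) (iota 0 (3 * nv G))).
Definition rl G x := index (sig G x) (vsG G).
Definition cpG G j := map (fun e : nat * nat => (rl G (j * nv G + e.1), rl G (j * nv G + e.2)))
        (edges G).

Lemma glueE G : glue G = MG (size (vsG G)) (cpG G 0 ++ cpG G 1 ++ cpG G 2)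
  (rl G (vtop G)) (rl G (nv G + vleft G)) (rl G (2 * nv G + vright G)).
Proof. by []. Qed.

Lemma rl_lt G x : x < 3 * nv G -> rl G x < size (vsG G).
Proof. by move=> h; rewrite /rl index_mem mem_undup map_f // mem_iota. Qed.

Lemma size_edges_glue G : size (edges (glue G)) = 3 * size (edges G).
Proof. by rewrite glueE /= !size_cat !size_map !mulSn mul0n addn0. Qed.

Lemma nth_edge_glue G j i : j < 3 -> i < size (edges G) ->
  nth (0, 0) (edges (glue G)) (j * size (edges G) + i) =
  (rl G (j * nv G + (nth (0,0) (edges G) i).1), rl G (j * nv G + (nth (0,0) (edges G) i).2)).
Proof.
move=> hj hi; rewrite glueE /=.
case: j hj => [|[|[|]]] // _.
- by rewrite mul0n add0n nth_cat size_map hi /cpG (nth_map (0,0)).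
- rewrite mul1n nth_cat size_map ltnNge leq_addr /= addKn nth_cat size_map hi.
  by rewrite /cpG (nth_map (0,0)).
- have e2 : 2 * size (edges G) + i = size (edges G) + (size (edges G) + i)
    by rewrite mul2n -addnn addnA.
  rewrite e2 nth_cat size_map ltnNge leq_addr /= addKn nth_cat size_map ltnNge leq_addr /= addKn.
  by rewrite /cpG (nth_map (0,0)) // mul2n -addnn.
Qed.

Definition connN G u v := sameComp (G := G) setT u v.

Lemma connN_trans G u v w : connN G u v -> connN G v w -> connN G u w.
Proof.
move=> /existsP[a /existsP[b /and3P[/eqP ea /eqP eb c1]]].
move=> /existsP[a' /existsP[b' /and3P[/eqP ea' /eqP eb' c2]]].
apply/existsP; exists a; apply/existsP; exists b'; rewrite ea eb' !eqxx /=.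
have E : b = a' by apply: val_inj; rewrite /= eb ea'.
rewrite E in c1.
exact: connect_trans c1 c2.
Qed.

Lemma connN_sym G u v : connN G u v -> connN G v u.
Proof.
move=> /existsP[a /existsP[b /and3P[/eqP ea /eqP eb c1]]].
apply/existsP; exists b; apply/existsP; exists a; rewrite ea eb !eqxx /=.
by rewrite (sym_connect_sym (@adjA_sym G setT)).
Qed.

Lemma connN_map G j u v : j < 3 -> connN G u v ->
  connN (glue G) (rl G (j * nv G + u)) (rl G (j * nv G + v)).
Proof.
move=> hj /existsP[a /existsP[b /and3P[/eqP ea /eqP eb c1]]].
have hx (x : 'I_(nv G)) : j * nv G + x < 3 * nv G.
  apply: (@leq_trans (j * nv G + nv G)); first by rewrite ltn_add2l.
  by rewrite -mulSnr leq_mul2r hj orbT.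
pose h (x : 'I_(nv G)) : 'I_(nv (glue G)) := Ordinal (rl_lt (hx x)).
apply/existsP; exists (h a); apply/existsP; exists (h b).
rewrite /= ea eb !eqxx /=.
have edge x y : adjA (G := G) setT x y -> adjA (G := glue G) setT (h x) (h y).
  move=> /existsP[i /andP[_ He]].
  have hi : j * size (edges G) + i < size (edges (glue G)).
    rewrite size_edges_glue.
    apply: (@leq_trans (j * size (edges G) + size (edges G))); first by rewrite ltn_add2l.
    by rewrite -mulSnr leq_mul2r hj orbT.
  apply/existsP; exists (Ordinal hi); rewrite inE /=.
  rewrite nth_edge_glue //=.
  by case/orP: He => /andP[/eqP -> /eqP ->]; rewrite !eqxx ?orbT.
case/connectP: c1 => p pth ->.
elim: p a pth {ea} => [|y p IH] x /=; first by rewrite connect0.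
case/andP => exy pth; apply: connect_trans (IH _ pth).
by apply: connect1; apply: edge.
Qed.

Definition good G := [&& vtop G < nv G, vleft G < nv G, vright G < nv G,
  connN G (vtop G) (vleft G) & connN G (vleft G) (vright G)].

Lemma good_glue G : good G -> good (glue G).
Proof.
case/and5P => ht hl hr ctl clr.
have N0 : 0 < nv G by apply: leq_ltn_trans ht.
have lt3 x : x < nv G -> forall j, j < 3 -> j * nv G + x < 3 * nv G.
  move=> hx j hj; apply: (@leq_trans (j * nv G + nv G)); first by rewrite ltn_add2l.
  by rewrite -mulSnr leq_mul2r hj orbT.
have sigv x : x < nv G -> sig G x = x.
  move=> hx; rewrite /sig.
  have n1 : (x == nv G + vtop G) = false by apply/negbTE; rewrite neq_ltn (leq_trans hx) ?leq_addr.
  have n2 : (x == 2 * nv G + vtop G) = false.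
    by apply/negbTE; rewrite neq_ltn (leq_trans hx) // (leq_trans _ (leq_addr _ _)) // leq_pmull.
  have n3 : (x == 2 * nv G + vleft G) = false.
    by apply/negbTE; rewrite neq_ltn (leq_trans hx) // (leq_trans _ (leq_addr _ _)) // leq_pmull.
  by rewrite n1 n2 n3.
have g1 : rl G (1 * nv G + vtop G) = rl G (0 * nv G + vleft G).
  by rewrite /rl mul1n mul0n add0n (sigv _ hl) /sig eqxx.
have g2 : rl G (2 * nv G + vtop G) = rl G (0 * nv G + vright G).
  rewrite /rl mul0n add0n (sigv _ hr) /sig.
  have -> : (2 * nv G + vtop G == nv G + vtop G) = false.
    apply/negbTE; rewrite neq_ltn; apply/orP; right; rewrite ltn_add2r mul2n -addnn -{1}(add0n (nv G)) ltn_add2r N0 //.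
  by rewrite eqxx.
have ctr : connN G (vtop G) (vright G) by apply: connN_trans ctl clr.
have c (j : nat) u v : j < 3 -> connN G u v -> connN (glue G) (rl G (j * nv G + u)) (rl G (j * nv G + v)).
  by move=> hj; apply: connN_map.
rewrite /good.
have -> : vtop (glue G) = rl G (0 * nv G + vtop G) by [].
have -> : vleft (glue G) = rl G (1 * nv G + vleft G) by rewrite mul1n.
have -> : vright (glue G) = rl G (2 * nv G + vright G) by [].
have -> : nv (glue G) = size (vsG G) by [].
rewrite !rl_lt ?(lt3 _ ht 0) ?(lt3 _ hl 1) ?(lt3 _ hr 2) //=.
apply/andP; split.
  apply: connN_trans (c 0 _ _ _ ctl) _ => //.
  by rewrite -g1; apply: c.
apply: connN_trans (c 1 _ _ _ (connN_sym ctl)) _ => //.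
rewrite g1; apply: connN_trans (c 0 _ _ _ clr) _ => //.
by rewrite -g2; apply: c.
Qed.

Local Open Scope ring_scope.
Lemma good_triangle : good triangle.
Proof.
apply/and5P; split => //.
  apply/existsP; exists (@Ordinal 3 0 isT); apply/existsP; exists (@Ordinal 3 1 isT).
  rewrite /=; apply: connect1; apply/existsP; exists (@Ordinal 3 0 isT); by rewrite inE.
apply/existsP; exists (@Ordinal 3 1 isT); apply/existsP; exists (@Ordinal 3 2 isT).
rewrite /=; apply: connect1; apply/existsP; exists (@Ordinal 3 1 isT); by rewrite inE.
Qed.

Lemma good_Gamma n : good (Gamma n).
Proof.
rewrite /Gamma; elim: n.-1 => [|k IH]; first exact: good_triangle.
by rewrite iterS; apply: good_glue.
Qed.

Theorem lemma3p3 (n : nat) : (1 <= n)%N ->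
  (exists Q : Zxy, T1 n = (xv - 1) * Q) /\
  (exists Q : Zxy, T0 n = (xv - 1) ^+ 2 * Q).
Proof.
move=> _; have := good_Gamma n; case/and5P => ht hl hr ctl clr.
split; [exact: (T1div ht hl ctl) | exact: (T0div ht hl hr ctl clr)].
Qed.
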